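(* Let $d \geq 2$ and let $k, j, \ell \in \mathbb{Z}^d \setminus \{0\}$. If $|k| - |j| + |\ell| \neq 0$, then \[ \Big| \frac{1}{|k| - |j| + |\ell|} \Big| \leq C\, |j|^2 |\ell| . \] If $|k| - |j| - |\ell| \neq 0$, then \[ \Big| \frac{1}{|k| - |j| - |\ell|} \Big| \leq C\, |j|\, |\ell|\, (|j| + |\ell|). \] Here $C$ is a universal constant; $C = 27$ suffices.
   Context: $|\cdot|$ denotes the Euclidean norm on $\mathbb{Z}^d \subset \mathbb{R}^d$. *)

(* Defs.v *)
From mathcomp Require Import all_boot all_order all_algebra.
From mathcomp Require Import reals.
Set Implicit Arguments. Unset Strict Implicit. Unset Printing Implicit Defensive.
Import Order.TTheory GRing.Theory Num.Theory.
Local Open Scope ring_scope.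

Definition enorm (R : realType) (d : nat) (v : 'rV[int]_d) : R :=
  Num.sqrt (\sum_(i < d) ((v 0 i)%:~R : R) ^+ 2).

(* Main.v *)
Require Import Defs.
From mathcomp Require Import all_boot all_order all_algebra reals ring lra.
Set Implicit Arguments.
Import Order.TTheory GRing.Theory Num.Theory.
Local Open Scope ring_scope.

Section S.
Variable R : realType.

Lemma int_ge1 (z : int) : z != 0 -> 1 <= `|z%:~R : R|.
Proof.
move=> hz; rewrite -intr_norm.
have : (1 <= `|z|)%R by rewrite -gtz0_ge1 normr_gt0.
by rewrite -(ler_int R).
Qed.

Lemma core (w m : int) (r : R) : 0 <= r -> r ^+ 2 = m%:~R ->
  w%:~R + r != 0 -> 1 <= `|w%:~R + r| * (1 + 2 * r).
Proof.
move=> r0 rm hne.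
have [e|ne] := eqVneq (w%:~R - r) 0.
  have rw : r = w%:~R by apply/eqP; rewrite eq_sym -subr_eq0 e.
  have wn : w != 0 by apply: contraNneq hne => w0; rewrite rw w0 mulr0z addr0.
  have r1 : 1 <= r.
    have := int_ge1 w wn. rewrite -rw. idtac. rewrite ger0_norm. by []. exact r0.
  have -> : w%:~R + r = 2 * r by rewrite rw; ring.
  rewrite ger0_norm; last by lra.
  nra.
have hp : (w%:~R + r) * (w%:~R - r) = (w ^+ 2 - m)%:~R :> R.
  by rewrite rmorphB rmorphXn /= -rm; ring.
have hp0 : (w ^+ 2 - m) != 0.
  by rewrite -(intr_eq0 R) -hp mulf_neq0.
have := int_ge1 _ hp0; rewrite -hp normrM.
have hB : `|w%:~R - r| <= `|w%:~R + r| + 2 * r.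
  have -> : w%:~R - r = (w%:~R + r) - 2 * r :> R by ring.
  apply: le_trans (ler_normB _ _) _.
  by rewrite (ger0_norm (_ : 0 <= 2 * r)) //; lra.
have := normr_ge0 (w%:~R + r : R); have := normr_ge0 (w%:~R - r : R).
move: hB; set A := `|w%:~R + r|; set B := `|w%:~R - r|.
move=> hB hB0 hA0 hAB.
have [A1|A1] := lerP 1 A; first nra.
nra.
Qed.

Definition sq d (k : 'rV[int]_d) : int := \sum_(i < d) (k 0 i) ^+ 2.

Lemma sq_cast d (k : 'rV[int]_d) : (sq k)%:~R = \sum_(i < d) ((k 0 i)%:~R : R) ^+ 2.
Proof. by rewrite /sq rmorph_sum; apply: eq_bigr => i _; rewrite rmorphXn. Qed.

Lemma sq_ge1 d (k : 'rV[int]_d) : k != 0 -> (1 <= sq k)%R.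
Proof.
move=> hk.
have [i hi] : exists i, k 0 i != 0.
  apply/existsP; apply: contraNT hk; rewrite negb_exists => /forallP h.
  apply/eqP/matrixP => a b; rewrite ord1 mxE; exact/eqP/negPn/h.
rewrite /sq (bigD1 i) //=.
apply: le_trans (_ : k 0 i ^+ 2 <= _).
  have : (1 <= `|k 0 i|)%R by rewrite -gtz0_ge1 normr_gt0.
  rewrite -real_normK ?num_real //; nra.
rewrite lerDl; apply: sumr_ge0 => ? _; exact: sqr_ge0.
Qed.

Lemma enorm_facts d (k : 'rV[int]_d) : k != 0 ->
  enorm R k ^+ 2 = (sq k)%:~R /\ 1 <= enorm R k.
Proof.
move=> hk; have h1 := sq_ge1 _ hk.
have h1R : (1%:~R : R) <= (sq k)%:~R by rewrite ler_int.
rewrite mulr1z in h1R.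
rewrite /enorm -sq_cast; split; first by rewrite sqr_sqrtr //; lra.
by rewrite -{1}sqrtr1 ler_sqrt //; lra.
Qed.
End S.

Theorem lemma5p3 (R : realType) (d : nat) (hd : (2 <= d)%N)
    (k j l : 'rV[int]_d) (hk : k != 0) (hj : j != 0) (hl : l != 0) :
  (enorm R k - enorm R j + enorm R l != 0 ->
     `|(enorm R k - enorm R j + enorm R l)^-1|
       <= 27 * enorm R j ^+ 2 * enorm R l) /\
  (enorm R k - enorm R j - enorm R l != 0 ->
     `|(enorm R k - enorm R j - enorm R l)^-1|
       <= 27 * enorm R j * enorm R l * (enorm R j + enorm R l)).
Proof.
have [ha x1] := enorm_facts R _ hk.
have [hb y1] := enorm_facts R _ hj.
have [hc z1] := enorm_facts R _ hl.
move: ha hb hc x1 y1 z1.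
set x := enorm R k; set y := enorm R j; set z := enorm R l.
set a := sq k; set b := sq j; set c := sq l.
move=> ha hb hc x1 y1 z1.
have hxyz : 0 < x + y + z by lra.
split.
- move=> hs; set s := x - y + z in hs *.
  rewrite normfV.
  have s0 : 0 < `|s| by rewrite normr_gt0.
  have [s1|s1] := lerP 1 `|s|.
    apply: le_trans (_ : 1 <= _); first by rewrite invf_le1.
    nra.
  rewrite -div1r ler_pdivrMr //.
  move: s1; rewrite ltr_norml => /andP [sl su]; rewrite /s in sl su.
  have xy : x <= y by lra.
  have zy : z <= y by lra.
  have hr : (2 * x * z) ^+ 2 = (4 * a * c)%:~R :> R.
    by rewrite !rmorphM /= -ha -hc; ring.
  have he : (a + c - b)%:~R + 2 * x * z = s * (x + y + z) :> R.
    by rewrite /s !rmorphD rmorphN /= -ha -hb -hc; ring.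
  have hne : (a + c - b)%:~R + 2 * x * z != 0 :> R.
    by rewrite he mulf_neq0 // gt_eqF.
  have r0 : 0 <= 2 * x * z by nra.
  have := @core R (a + c - b) (4 * a * c) (2 * x * z) r0 hr hne.
  rewrite he normrM (ger0_norm (ltW hxyz)).
  have hxz : x * z <= y * z by nra.
  have hb1 : (x + y + z) * (1 + 2 * (2 * x * z)) <= 27 * y ^+ 2 * z.
    have h3 : x + y + z <= 3 * y by lra.
    have h4 : 1 + 2 * (2 * x * z) <= 5 * (y * z) by nra.
    have : (x + y + z) * (1 + 2 * (2 * x * z)) <= 3 * y * (5 * (y * z)).
      apply: ler_pM => //; nra.
    nra.
  move=> h; nra.
- move=> hs; set s := x - y - z in hs *.
  rewrite normfV.
  have s0 : 0 < `|s| by rewrite normr_gt0.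
  have [s1|s1] := lerP 1 `|s|.
    apply: le_trans (_ : 1 <= _); first by rewrite invf_le1.
    nra.
  rewrite -div1r ler_pdivrMr //.
  move: s1; rewrite ltr_norml => /andP [sl su]; rewrite /s in sl su.
  have hr : (2 * y * z) ^+ 2 = (4 * b * c)%:~R :> R.
    by rewrite !rmorphM /= -hb -hc; ring.
  have he : (b + c - a)%:~R + 2 * y * z = - (s * (x + y + z)) :> R.
    by rewrite /s !rmorphD rmorphN /= -ha -hb -hc; ring.
  have hne : (b + c - a)%:~R + 2 * y * z != 0 :> R.
    by rewrite he oppr_eq0 mulf_neq0 // gt_eqF.
  have r0 : 0 <= 2 * y * z by nra.
  have := @core R (b + c - a) (4 * b * c) (2 * y * z) r0 hr hne.
  rewrite he normrN normrM (ger0_norm (ltW hxyz)).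
  have hb1 : (x + y + z) * (1 + 2 * (2 * y * z)) <= 27 * y * z * (y + z).
    have h3 : x + y + z <= 3 * (y + z) by lra.
    have h4 : 1 + 2 * (2 * y * z) <= 5 * (y * z) by nra.
    have : (x + y + z) * (1 + 2 * (2 * y * z)) <= 3 * (y + z) * (5 * (y * z)).
      apply: ler_pM => //; nra.
    nra.
  move=> h; nra.
Qed.
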